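(* Let $k\ge 1$ be an integer, let $g,h$ be any two encoders and $\mathcal D$ any task distribution. With the $k$-negative losses defined below, $$L^{(k)}_{\mathrm{con}}(g;\mathcal D)\le \alpha L^{(k)}_{\mathrm{con}}(h;\mathcal D)+L^{(k)}_{\mathrm{dis}}(g;h,\mathcal D)+\beta,$$ $$L^{(k)}_{\mathrm{con}}(g;\mathcal D)\ge \alpha L^{(k)}_{\mathrm{con}}(h;\mathcal D)+L^{(k)}_{\mathrm{dis}}(g;h,\mathcal D)+\beta',$$ where $\alpha=\frac{2e^2}{k+e^2}$, $\beta=2-\alpha+\alpha\log\frac{\alpha}{2}$ and $\beta'=-\alpha\log(1+ke^2)-\frac{2ke^2}{1+ke^2}$.
   Context: Let $\mathcal X$ be a measurable input space and $d\ge 1$. An encoder is a measurable map $f:\mathcal X\to\mathbb R^d$ with $\|f(x)\|_2=1$ for all $x$. A task distribution $\mathcal D$ consists of a probability distribution $\mu$ on a countable set of classes together with, for each class $c$, a probability distribution $\mathcal D_c$ on $\mathcal X$. $k$-negative sampling scheme: $c^+,c_1^-,\dots,c_k^-\sim\mu$ independently; given $c^+$, $x,x^+$ are drawn i.i.d. from $\mathcal D_{c^+}$; independently, $x_i^-\sim\mathcal D_{c_i^-}$ for $i=1,\dots,k$. For $\mathbf v\in\mathbb R^k$ let $\ell(\mathbf v)=\log\big(1+\sum_{i=1}^k e^{-v_i}\big)$. The $k$-negative contrastive loss is $L^{(k)}_{\mathrm{con}}(f;\mathcal D)=\mathbb E\big[\ell\big((f(x)^\top(f(x^+)-f(x_i^-)))_{i=1}^k\big)\big]$.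 Let $\mathbf p(f;x,x^+,x_1^-,\dots,x_k^-)=\mathrm{softmax}\big(f(x)^\top f(x^+),f(x)^\top f(x_1^-),\dots,f(x)^\top f(x_k^-)\big)\in\mathbb R^{k+1}$, and for encoders $g,h$ let $L^{(k)}_{\mathrm{dis}}(g;h,\mathcal D)=\mathbb E\big[-\mathbf p(h;x,x^+,x_1^-,\dots,x_k^-)\cdot\log\mathbf p(g;x,x^+,x_1^-,\dots,x_k^-)\big]$ under the same sampling scheme. *)

(* Defs.v *)
From HB Require Import structures.
From mathcomp Require Import all_boot all_order all_algebra.
From mathcomp Require Import all_classical all_reals all_analysis.
Set Implicit Arguments. Unset Strict Implicit. Unset Printing Implicit Defensive.
Import Order.TTheory GRing.Theory Num.Theory.
Local Open Scope classical_set_scope.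
Local Open Scope ring_scope.

Section Contrastive.
Variables (R : realType) (dX : measure_display) (X : measurableType dX)
          (C : countType) (d : nat).

Definition dotp (u v : 'rV[R]_d) : R := \sum_(i < d) u 0 i * v 0 i.

(* an encoder: measurable (coordinatewise, i.e. for the Borel product
   sigma-algebra of R^d) with unit Euclidean norm *)
Definition is_encoder (f : X -> 'rV[R]_d) : Prop :=
  (forall i : 'I_d, measurable_fun setT (fun x => f x 0 i)) /\
  (forall x, Num.sqrt (\sum_(i < d) (f x 0 i) ^+ 2) = 1).

Definition ell (v : seq R) : R := ln (1 + \sum_(a <- v) expR (- a)).

Definition con_integrand (f : X -> 'rV[R]_d) (x xp : X) (negs : seq X) : R :=
  ell [seq dotp (f x) (f xp - f y) | y <- negs].

Definition softmax (s : seq R) : seq R :=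
  [seq expR a / (\sum_(b <- s) expR b) | a <- s].

Definition pvec (f : X -> 'rV[R]_d) (x xp : X) (negs : seq X) : seq R :=
  softmax (dotp (f x) (f xp) :: [seq dotp (f x) (f y) | y <- negs]).

Definition dis_integrand (g h : X -> 'rV[R]_d) (x xp : X) (negs : seq X) : R :=
  - \sum_(pq <- zip (pvec h x xp negs) (pvec g x xp negs)) pq.1 * ln pq.2.

Variables (mu : C -> R) (D : C -> probability X R).

(* expectation over the k negatives: c_i^- ~ mu, x_i^- ~ D_{c_i^-}, independent *)
Fixpoint negE (k : nat) (G : seq X -> \bar R) : \bar R :=
  match k with
  | 0 => G [::]
  | k'.+1 => \esum_(c in [set: C]) ((mu c)%:E *
              \int[D c]_y negE k' (fun s => G (y :: s)))%E
  end.

Definition sampleE (k : nat) (F : X -> X -> seq X -> \bar R) : \bar R :=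
  \esum_(c in [set: C]) ((mu c)%:E *
     \int[D c]_x \int[D c]_xp negE k (fun s => F x xp s))%E.

Definition Lcon (k : nat) (f : X -> 'rV[R]_d) : \bar R :=
  sampleE k (fun x xp s => (con_integrand f x xp s)%:E).

Definition Ldis (k : nat) (g h : X -> 'rV[R]_d) : \bar R :=
  sampleE k (fun x xp s => (dis_integrand g h x xp s)%:E).

End Contrastive.

Definition alpha_k (R : realType) (k : nat) : R :=
  2 * expR 2 / (k%:R + expR 2).
Definition beta_k (R : realType) (k : nat) : R :=
  2 - alpha_k R k + alpha_k R k * ln (alpha_k R k / 2).
Definition beta'_k (R : realType) (k : nat) : R :=
  - alpha_k R k * ln (1 + k%:R * expR 2)
  - 2 * k%:R * expR 2 / (1 + k%:R * expR 2).

(* Main.v *)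
Require Import Defs.
From HB Require Import structures.
From mathcomp Require Import all_boot all_order all_algebra.
From mathcomp Require Import all_classical all_reals all_analysis.
From mathcomp Require Import measurable_realfun.
From mathcomp Require Import lra ring.
Import Order.TTheory GRing.Theory Num.Theory.
Local Open Scope classical_set_scope.
Local Open Scope ring_scope.
Section E.
Variables (R : realType) (C : countType).
Local Open Scope ereal_scope.

Lemma esumZl_ge0 (a : R) (f : C -> \bar R) : (0 <= a)%R -> (forall c, 0 <= f c) ->
  \esum_(c in [set: C]) (a%:E * f c) = a%:E * \esum_(c in [set: C]) f c.
Proof.
move=> a0 f0; have [->|ap] := eqVneq a 0%R.
  by rewrite mul0e esum1// => c _; rewrite mul0e.
have {ap}ap : (0 < a)%R by rewrite lt_def ap.
rewrite /esum -ereal_sup_pZl//; congr ereal_sup.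
apply/seteqP; split => x /=.
  by move=> [A fA <-]; exists (\sum_(c \in A) f c) => //; [exists A|rewrite ge0_mule_fsumr].
by move=> [y [A fA <-] <-]; exists A => //; rewrite ge0_mule_fsumr.
Qed.

Lemma esum_measurable dP (P : measurableType dP) (f : C -> P -> \bar R) :
  (forall c p, 0 <= f c p) -> (forall c, measurable_fun setT (f c)) ->
  measurable_fun setT (fun p => \esum_(c in [set: C]) f c p).
Proof.
move=> f0 mf.
pose g (n : nat) (p : P) := if (@pickle_inv C n) is Some c then f c p else 0.
have -> : (fun p => \esum_(c in [set: C]) f c p) =
          (fun p => \sum_(0 <= n <oo | n \in predT) g n p).
  apply/funext => p.
  have g0 : forall n, 0 <= g n p by move=> n; rewrite /g; case: pickle_inv.
  rewrite (_ : \sum_(0 <= n <oo | n \in predT) g n p = \sum_(n <oo) g n p) //.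
  rewrite nneseries_esumT//.
  have -> : \esum_(c in [set: C]) f c p = \esum_(c in [set: C]) g (pickle c) p.
    by apply: eq_esum => c _; rewrite /g pickleK_inv.
  rewrite -(reindex_esum [set: C] (pickle @` [set: C]) pickle (g ^~ p)); last first.
    by apply: inj_bij => x y _ _; exact: (pcan_inj pickleK_inv).
  rewrite esum_mkcond; apply: eq_esum => n _.
  case: ifPn => //; rewrite /g; case E: pickle_inv => [c|//].
  move=> /negP H; exfalso; apply: H; rewrite inE; exists c => //; have := @pickle_invK C n; rewrite E; done.
apply: ge0_emeasurable_sum => [k x _ _|k _]; rewrite /g; case: pickle_inv => //.
Qed.
End E.
Section Re. Variable R : realType.
Lemma ln_le_sub1 (x : R) : 0 < x -> ln x <= x - 1.
Proof. move=> x0; have := expR_ge1Dx (ln x); rewrite lnK ?posrE //; lra. Qed.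

Lemma core_upper (a s0 S V : R) : 0 < a -> 0 <= S -> V <= 2 * S ->
  V / (expR s0 + S) <= a * (ln (expR s0 + S) - s0) + (2 - a + a * ln (a / 2)).
Proof.
move=> a0 S0 VS.
set E := expR s0; set Z := E + S.
have E0 : 0 < E by apply: expR_gt0.
have Z0 : 0 < Z by rewrite /Z; lra.
set q := E / Z.
have q0 : 0 < q by apply: divr_gt0.
have a20 : 0 < a / 2 by apply: divr_gt0.
have hq : ln q = s0 - ln Z by rewrite /q ln_div ?posrE // /E expRK.
set x := q / (a / 2).
have x0 : 0 < x by apply: divr_gt0.
have hx : ln x = ln q - ln (a / 2) by rewrite /x ln_div ?posrE.
have hle : a * ln x <= a * (x - 1) by rewrite ler_pM2l // ln_le_sub1.
have hax : a * x = 2 * q by rewrite /x; field; lra.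
have hV : V / Z <= 2 - 2 * q.
  have -> : 2 - 2 * q = (2 * S) / Z by rewrite /q /Z; field; lra.
  by rewrite ler_pM2r // invr_gt0.
rewrite hx hq in hle.
have e1 : a * (ln q - ln (a / 2)) = a * s0 - a * ln Z - a * ln (a / 2) by rewrite hq; ring.
rewrite -hq in hle.
nra.
Qed.
Lemma core_lower (k : nat) (a s0 S V : R) : 0 <= a -> -1 <= s0 -> 0 <= S ->
  S <= k%:R * expR 1 -> - (2 * S) <= V ->
  a * (ln (expR s0 + S) - s0) +
  (- a * ln (1 + k%:R * expR 2) - 2 * k%:R * expR 2 / (1 + k%:R * expR 2))
  <= V / (expR s0 + S).
Proof.
move=> a0 s1 S0 Sk VS.
set E := expR s0; set Z := E + S.
have E0 : 0 < E by apply: expR_gt0.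
have Z0 : 0 < Z by rewrite /Z; lra.
set e := expR (1 : R).
have e0 : 0 < e by apply: expR_gt0.
have Sk1 : S <= k%:R * e by exact: Sk.
have e2 : expR (2 : R) = e * e by rewrite -expRD.
rewrite e2.
have K0 : 0 <= k%:R :> R by [].
set K := k%:R in Sk K0 *.
have eE : 1 <= e * E.
  rewrite /e /E -expRD; apply: (@le_trans _ _ (expR 0)); first by rewrite expR0.
  rewrite ler_expR; lra.
have hln : ln Z - s0 <= ln (1 + K * (e * e)).
  have -> : ln Z - s0 = ln (Z / E) by rewrite ln_div ?posrE // /E expRK.
  rewrite ler_ln ?posrE; last 2 first.
  - by apply: divr_gt0.
  - have : 0 <= K * (e * e) by apply: mulr_ge0 => //; apply: mulr_ge0; lra.
    lra.
  rewrite ler_pdivrMr // /Z.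
  have Ke0 : 0 <= K * e by apply: mulr_ge0 => //; lra.
  have := ler_wpM2l Ke0 eE; rewrite mulr1 => ?.
  have : S <= K * e * (e * E) by lra.
  lra.
have hfrac : - (2 * K * (e * e) / (1 + K * (e * e))) <= V / Z.
  have P0 : 0 < 1 + K * (e * e).
    have : 0 <= K * (e * e) by apply: mulr_ge0 => //; apply: mulr_ge0; lra.
    lra.
  have h1 : -(2*S)/Z <= V/Z by rewrite ler_pM2r ?invr_gt0.
  have h2 : 2*S/Z <= 2*K*(e*e)/(1 + K * (e * e)).
    rewrite ler_pdivrMr // mulrAC ler_pdivlMr //.
    have Ke0 : 0 <= K * e by apply: mulr_ge0 => //; lra.
    have := ler_wpM2l Ke0 eE; rewrite mulr1 => ?.
    have : S <= K * e * (e * E) by lra.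
    rewrite /Z; lra.
  have : -(2*S)/Z = - (2*S/Z) by rewrite mulNr.
  lra.
have : a * (ln Z - s0) <= a * ln (1 + K * (e * e)) by rewrite ler_wpM2l.
lra.
Qed.
End Re.

Section N.
Variables (R : realType) (dX : measure_display) (X : measurableType dX) (C : countType).
Variables (mu : C -> R) (D : C -> probability X R).
Hypothesis mu_ge0 : forall c, (0 <= mu c)%R.
Hypothesis mu_sum1 : (\esum_(c in [set: C]) (mu c)%:E = 1)%E.
Local Open Scope ereal_scope.
Notation NE := (negE mu D).

Lemma negE_ge0 k G : (forall s, 0 <= G s) -> 0 <= NE k G.
Proof.
elim: k G => [|k IH] G G0 //=.
apply: esum_ge0 => c _; apply: mule_ge0; first by rewrite lee_fin.
by apply: integral_ge0 => y _; apply: IH.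
Qed.

Fixpoint MQ k (G : seq X -> \bar R) : Prop :=
  match k with
  | 0 => True
  | k'.+1 => measurable_fun setT (fun y => NE k' (fun s => G (y :: s))) /\
             forall y, MQ k' (fun s => G (y :: s))
  end.

Lemma negE_le k G1 G2 : (forall s, 0 <= G1 s) -> MQ k G1 -> MQ k G2 ->
  (forall s, size s = k -> G1 s <= G2 s) -> NE k G1 <= NE k G2.
Proof.
elim: k G1 G2 => [|k IH] G1 G2 /= g0 m1 m2 le; first exact: le.
apply: le_esum => c _; apply: lee_wpmul2l; first by rewrite lee_fin.
apply: ge0_le_integral => //; first by move=> y _; apply: negE_ge0.
- exact: m1.1.
- exact: m2.1.
move=> y _; apply: IH => //; [exact: m1.2|exact: m2.2|].
by move=> s hs; apply: le; rewrite /= hs.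
Qed.

Lemma negE_add k G1 G2 : (forall s, 0 <= G1 s) -> (forall s, 0 <= G2 s) ->
  MQ k G1 -> MQ k G2 -> NE k (fun s => G1 s + G2 s) = NE k G1 + NE k G2.
Proof.
elim: k G1 G2 => [|k IH] G1 G2 /= g1 g2 m1 m2 //.
rewrite -esumD; last 2 first.
- move=> c _; apply: mule_ge0; first by rewrite lee_fin.
  by apply: integral_ge0 => y _; apply: negE_ge0.
- move=> c _; apply: mule_ge0; first by rewrite lee_fin.
  by apply: integral_ge0 => y _; apply: negE_ge0.
apply: eq_esum => c _; rewrite -ge0_muleDr; last 2 first.
- by apply: integral_ge0 => y _; apply: negE_ge0.
- by apply: integral_ge0 => y _; apply: negE_ge0.
congr (_ * _); rewrite -ge0_integralD //; last 4 first.
- by move=> y _; apply: negE_ge0.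
- exact: m1.1.
- by move=> y _; apply: negE_ge0.
- exact: m2.1.
apply: eq_integral => y _; apply: IH => //; [exact: m1.2|exact: m2.2].
Qed.

Lemma negE_scale k (a : R) G : (0 <= a)%R -> (forall s, 0 <= G s) ->
  MQ k G -> NE k (fun s => a%:E * G s) = a%:E * NE k G.
Proof.
move=> a0; elim: k G => [|k IH] G /= g0 m //.
rewrite -esumZl_ge0 //; last first.
  move=> c; apply: mule_ge0; first by rewrite lee_fin.
  by apply: integral_ge0 => y _; apply: negE_ge0.
apply: eq_esum => c _; rewrite muleCA; congr (_ * _).
rewrite -ge0_integralZl_EFin //; last 2 first.
- by move=> y _; apply: negE_ge0.
- exact: m.1.
apply: eq_integral => y _; apply: IH => //; exact: m.2.
Qed.

Lemma negE_cst k (r : R) : (0 <= r)%R -> NE k (fun _ => r%:E) = r%:E.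
Proof.
move=> r0; elim: k => [|k IH] //=.
rewrite (eq_esum (b := fun c => r%:E * (mu c)%:E)); last first.
  move=> c _; rewrite (eq_integral (fun _ => r%:E)); last by move=> y _; rewrite IH.
  rewrite integral_cst // [X in _ * (_ * X)](_ : _ = 1); first by rewrite mule1 muleC.
  exact: probability_setT.
by rewrite esumZl_ge0 // ?mu_sum1 ?mule1 // => c; rewrite lee_fin.
Qed.

Lemma MQ_add k G1 G2 : (forall s, 0 <= G1 s) -> (forall s, 0 <= G2 s) ->
  MQ k G1 -> MQ k G2 -> MQ k (fun s => G1 s + G2 s).
Proof.
elim: k G1 G2 => [|k IH] G1 G2 //= g1 g2 m1 m2; split; last first.
  by move=> y; apply: IH => //; [exact: m1.2|exact: m2.2].
rewrite (_ : (fun y => _) = (fun y => NE k (fun s => G1 (y :: s)) + NE k (fun s => G2 (y :: s)))).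
  by apply: emeasurable_funD; [exact: m1.1|exact: m2.1].
by apply/funext => y; apply: negE_add => //; [exact: m1.2|exact: m2.2].
Qed.

Lemma MQ_scale k (a : R) G : (0 <= a)%R -> (forall s, 0 <= G s) ->
  MQ k G -> MQ k (fun s => a%:E * G s).
Proof.
move=> a0; elim: k G => [|k IH] G //= g0 m; split; last first.
  by move=> y; apply: IH => //; exact: m.2.
rewrite (_ : (fun y => _) = (fun y => a%:E * NE k (fun s => G (y :: s)))).
  by apply: emeasurable_funM; [exact: measurable_cst|exact: m.1].
by apply/funext => y; apply: negE_scale => //; exact: m.2.
Qed.

Lemma MQ_cst k (r : R) : (0 <= r)%R -> MQ k (fun _ => r%:E).
Proof.
move=> r0; elim: k => [|k IH] //=; split => // .
Qed.

Definition HT (T : (nat -> R) -> R) := forall dP (P : measurableType dP) (a : nat -> P -> R),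
  (forall i, measurable_fun setT (a i)) -> measurable_fun setT (fun p => T (fun i => a i p)).
Lemma negE_param k : forall dP (P : measurableType dP) (T : (nat -> R) -> R)
  (c : nat -> P -> R) (phi : nat -> P * X -> R), HT T ->
  (forall i, measurable_fun setT (c i)) -> (forall i, measurable_fun setT (phi i)) ->
  (forall p s, (0 <= T (fun i => c i p + \sum_(y <- s) phi i (p, y)))%R) ->
  measurable_fun setT (fun p => NE k (fun s => (T (fun i => c i p + \sum_(y <- s) phi i (p, y)))%:E)).
Proof.
elim: k => [|k IH] dP P T c phi hT mc mphi T0 /=.
  apply/measurable_EFinP; rewrite (_ : (fun p => _) = (fun p => T (fun i => c i p))); last first.
    by apply/funext => p; congr T; apply/funext => i; rewrite big_nil addr0.
  exact: hT.
apply: esum_measurable.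
  move=> c0 p; apply: mule_ge0; first by rewrite lee_fin.
  by apply: integral_ge0 => y _; apply: negE_ge0 => s; rewrite lee_fin.
move=> c0; apply: emeasurable_funM; first exact: measurable_cst.
pose c' := fun i (q : P * X) => (c i q.1 + phi i q)%R.
pose phi' := fun i (qz : (P * X) * X) => phi i (qz.1.1, qz.2).
have T0' : forall q s, (0 <= T (fun i => c' i q + \sum_(y <- s) phi' i (q, y)))%R.
  move=> [p y] s; rewrite /c' /phi' /=.
  rewrite (_ : (fun i => _) = (fun i => c i p + \sum_(y <- y :: s) phi i (p, y))%R); first exact: T0.
  by apply/funext => i; rewrite big_cons addrA.
have := IH _ _ T c' phi' hT.
set F := (fun p => NE k _) => mF.
have -> : (fun p => \int[D c0]_y NE k (fun s => (T (fun i => c i p + \sum_(y0 <- y :: s) phi i (p, y0)))%:E))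
   = fubini_F (D c0) F.
  apply/funext => p; rewrite /fubini_F; apply: eq_integral => y _; rewrite /F /=.
  congr (NE k _); apply/funext => s; congr (_%:E); congr T; apply/funext => i.
  by rewrite big_cons addrA.
apply: measurable_fun_fubini_tonelli_F.
  apply: mF.
  - move=> i; rewrite /c'; apply: measurable_funD => //.
    exact: measurableT_comp (mc i) measurable_fst.
  - move=> i; rewrite /phi'; apply: measurableT_comp (mphi i) _.
    apply: measurable_fun_pair; last exact: measurable_snd.
    exact: measurableT_comp measurable_fst measurable_fst.
  - exact: T0'.
by move=> q; rewrite /F; apply: negE_ge0 => s; rewrite lee_fin; apply: T0'.
Qed.
Lemma MQ_form k : forall (T : (nat -> R) -> R) (c : nat -> R) (phi : nat -> X -> R), HT T ->
  (forall i, measurable_fun setT (phi i)) ->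
  (forall s, (0 <= T (fun i => c i + \sum_(y <- s) phi i y))%R) ->
  MQ k (fun s => (T (fun i => c i + \sum_(y <- s) phi i y))%:E).
Proof.
elim: k => [|k IH] T c phi hT mphi T0 //=; split.
  have := @negE_param k _ X T (fun i y => c i + phi i y)%R (fun i yz => phi i yz.2) hT.
  move=> H.
  rewrite (_ : (fun y => _) = (fun y => NE k (fun s => (T (fun i => (c i + phi i y) + \sum_(y0 <- s) phi i (y, y0).2)%R)%:E))).
    apply: H.
    - move=> i; apply: measurable_funD => //; exact: measurable_cst.
    - move=> i; exact: measurableT_comp (mphi i) measurable_snd.
    - move=> y s /=; rewrite (_ : (fun i => _) = (fun i => c i + \sum_(y0 <- y :: s) phi i y0)%R); first exact: T0.
      by apply/funext => i; rewrite big_cons addrA.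
  apply/funext => y; congr (NE k _); apply/funext => s; congr (_%:E); congr T.
  by apply/funext => i; rewrite big_cons addrA.
move=> y.
rewrite (_ : (fun s => _) = (fun s => (T (fun i => (c i + phi i y) + \sum_(y0 <- s) phi i y0)%R)%:E)).
  apply: IH => // s; rewrite (_ : (fun i => _) = (fun i => c i + \sum_(y0 <- y :: s) phi i y0)%R); first exact: T0.
  by apply/funext => i; rewrite big_cons addrA.
apply/funext => s; congr (_%:E); congr T.
by apply/funext => i; rewrite big_cons addrA.
Qed.
Notation SE := (sampleE mu D).

Definition SQ k (F : X -> X -> seq X -> \bar R) :=
  (forall x xp, MQ k (F x xp)) /\
  (forall x, measurable_fun setT (fun xp => NE k (F x xp))) /\
  (forall c, measurable_fun setT (fun x => \int[D c]_xp NE k (F x xp))).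

Definition nn (F : X -> X -> seq X -> \bar R) := forall x xp s, 0 <= F x xp s.

Lemma int_NE_ge0 k c F : nn F -> forall x, 0 <= \int[D c]_xp NE k (F x xp).
Proof. by move=> F0 x; apply: integral_ge0 => xp _; apply: negE_ge0. Qed.

Lemma sampleE_ge0 k F : nn F -> 0 <= SE k F.
Proof.
move=> F0; apply: esum_ge0 => c _; apply: mule_ge0; first by rewrite lee_fin.
by apply: integral_ge0 => x _; apply: int_NE_ge0.
Qed.

Lemma sampleE_le k F1 F2 : nn F1 -> SQ k F1 -> SQ k F2 ->
  (forall x xp s, size s = k -> F1 x xp s <= F2 x xp s) -> SE k F1 <= SE k F2.
Proof.
move=> F0 [m1 [n1 o1]] [m2 [n2 o2]] le.
apply: le_esum => c _; apply: lee_wpmul2l; first by rewrite lee_fin.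
apply: ge0_le_integral => //; first by move=> x _; apply: int_NE_ge0.
move=> x _; apply: ge0_le_integral => //; first by move=> xp _; apply: negE_ge0.
move=> xp _; apply: negE_le => //; exact: le.
Qed.

Lemma sampleE_add k F1 F2 : nn F1 -> nn F2 -> SQ k F1 -> SQ k F2 ->
  SE k (fun x xp s => F1 x xp s + F2 x xp s) = SE k F1 + SE k F2.
Proof.
move=> g1 g2 [m1 [n1 o1]] [m2 [n2 o2]].
rewrite /sampleE -esumD; last 2 first.
- move=> c _; apply: mule_ge0; first by rewrite lee_fin.
  by apply: integral_ge0 => x _; apply: int_NE_ge0.
- move=> c _; apply: mule_ge0; first by rewrite lee_fin.
  by apply: integral_ge0 => x _; apply: int_NE_ge0.
apply: eq_esum => c _; rewrite -ge0_muleDr; last 2 first.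
- by apply: integral_ge0 => x _; apply: int_NE_ge0.
- by apply: integral_ge0 => x _; apply: int_NE_ge0.
congr (_ * _); rewrite -ge0_integralD //; last 2 first.
- by move=> x _; apply: int_NE_ge0.
- by move=> x _; apply: int_NE_ge0.
apply: eq_integral => x _; rewrite -ge0_integralD //; last 2 first.
- by move=> xp _; apply: negE_ge0.
- by move=> xp _; apply: negE_ge0.
by apply: eq_integral => xp _; apply: negE_add.
Qed.

Lemma sampleE_scale k (a : R) F : (0 <= a)%R -> nn F -> SQ k F ->
  SE k (fun x xp s => a%:E * F x xp s) = a%:E * SE k F.
Proof.
move=> a0 F0 [m [n o]].
rewrite /sampleE -esumZl_ge0 //; last first.
  move=> c; apply: mule_ge0; first by rewrite lee_fin.
  by apply: integral_ge0 => x _; apply: int_NE_ge0.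
apply: eq_esum => c _; rewrite muleCA; congr (_ * _).
rewrite -ge0_integralZl_EFin //; last by move=> x _; apply: int_NE_ge0.
apply: eq_integral => x _; rewrite -ge0_integralZl_EFin //; last by move=> xp _; apply: negE_ge0.
by apply: eq_integral => xp _; apply: negE_scale.
Qed.

Lemma sampleE_cst k (r : R) : (0 <= r)%R -> SE k (fun _ _ _ => r%:E) = r%:E.
Proof.
move=> r0; rewrite /sampleE.
rewrite (eq_esum (b := fun c => r%:E * (mu c)%:E)); last first.
  move=> c _; rewrite (eq_integral (fun _ => r%:E)); last first.
    move=> x _; rewrite (eq_integral (fun _ => r%:E)); last by move=> y _; rewrite negE_cst.
    rewrite integral_cst // [X in _ * X](_ : _ = 1); first by rewrite mule1.
    exact: probability_setT.
  rewrite integral_cst // [X in _ * (_ * X)](_ : _ = 1); first by rewrite mule1 muleC.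
  exact: probability_setT.
by rewrite esumZl_ge0 // ?mu_sum1 ?mule1 // => c; rewrite lee_fin.
Qed.

Lemma SQ_add k F1 F2 : nn F1 -> nn F2 -> SQ k F1 -> SQ k F2 ->
  SQ k (fun x xp s => F1 x xp s + F2 x xp s).
Proof.
move=> g1 g2 [m1 [n1 o1]] [m2 [n2 o2]]; split; [|split].
- by move=> x xp; apply: MQ_add.
- move=> x; rewrite (_ : (fun xp => _) = (fun xp => NE k (F1 x xp) + NE k (F2 x xp))).
    exact: emeasurable_funD.
  by apply/funext => xp; apply: negE_add.
- move=> c; rewrite (_ : (fun x => _) = (fun x => \int[D c]_xp NE k (F1 x xp) + \int[D c]_xp NE k (F2 x xp))).
    exact: emeasurable_funD.
  apply/funext => x; rewrite -ge0_integralD //; last 2 first.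
  + by move=> xp _; apply: negE_ge0.
  + by move=> xp _; apply: negE_ge0.
  by apply: eq_integral => xp _; apply: negE_add.
Qed.

Lemma SQ_scale k (a : R) F : (0 <= a)%R -> nn F -> SQ k F ->
  SQ k (fun x xp s => a%:E * F x xp s).
Proof.
move=> a0 F0 [m [n o]]; split; [|split].
- by move=> x xp; apply: MQ_scale.
- move=> x; rewrite (_ : (fun xp => _) = (fun xp => a%:E * NE k (F x xp))).
    by apply: emeasurable_funM => //; exact: measurable_cst.
  by apply/funext => xp; apply: negE_scale.
- move=> c; rewrite (_ : (fun x => _) = (fun x => a%:E * \int[D c]_xp NE k (F x xp))).
    by apply: emeasurable_funM => //; exact: measurable_cst.
  apply/funext => x; rewrite -ge0_integralZl_EFin //; last by move=> xp _; apply: negE_ge0.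
  by apply: eq_integral => xp _; apply: negE_scale.
Qed.

Lemma SQ_cst k (r : R) : (0 <= r)%R -> SQ k (fun _ _ _ => r%:E).
Proof.
move=> r0; split; [|split].
- by move=> x xp; apply: MQ_cst.
- by move=> x; rewrite (_ : (fun xp => _) = (fun xp => r%:E)) //; apply/funext => xp; rewrite negE_cst.
- move=> c; rewrite (_ : (fun x => _) = (fun x => r%:E)) //; apply/funext => x.
  rewrite (eq_integral (fun _ => r%:E)); last by move=> y _; rewrite negE_cst.
  rewrite integral_cst // [X in _ * X](_ : _ = 1); first by rewrite mule1.
  exact: probability_setT.
Qed.
Lemma SQ_form k (T : (nat -> R) -> R) (c phi : nat -> X * X -> R) : HT T ->
  (forall i, measurable_fun setT (c i)) -> (forall i, measurable_fun setT (phi i)) ->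
  (forall x xp s, (0 <= T (fun i => c i (x, xp) + \sum_(y <- s) phi i (x, y)))%R) ->
  SQ k (fun x xp s => (T (fun i => c i (x, xp) + \sum_(y <- s) phi i (x, y)))%:E).
Proof.
move=> hT mc mphi T0; split; [|split].
- move=> x xp; apply: (MQ_form k T (fun i => c i (x, xp)) (fun i y => phi i (x, y))) => //.
  move=> i; apply: measurableT_comp (mphi i) _.
  by apply: measurable_fun_pair => //; exact: measurable_cst.
- move=> x.
  have := @negE_param k _ X T (fun i xp => c i (x, xp)) (fun i q => phi i (x, q.2)) hT.
  apply.
  + move=> i; apply: measurableT_comp (mc i) _.
    by apply: measurable_fun_pair => //; exact: measurable_cst.
  + move=> i; apply: measurableT_comp (mphi i) _.
    apply: measurable_fun_pair; [exact: measurable_cst|exact: measurable_snd].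
  + by move=> xp s; apply: T0.
- move=> c0.
  have := @negE_param k _ (X * X)%type T c (fun i q => phi i (q.1.1, q.2)) hT.
  set G := (fun p => NE k _) => mG.
  have -> : (fun x => \int[D c0]_xp NE k (fun s => (T (fun i => c i (x, xp) + \sum_(y <- s) phi i (x, y)))%:E))
     = fubini_F (D c0) G by [].
  apply: measurable_fun_fubini_tonelli_F.
    apply: mG => //.
    + move=> i; apply: measurableT_comp (mphi i) _.
      apply: measurable_fun_pair; last exact: measurable_snd.
      exact: measurableT_comp measurable_fst measurable_fst.
    + by move=> [x xp] s; apply: T0.
  by move=> q; apply: negE_ge0 => s; rewrite lee_fin; case: q => x xp; apply: T0.
Qed.
Variable d : nat.
Local Open Scope ring_scope.

Definition dt (f : X -> 'rV[R]_d) (q : X * X) : R := dotp (f q.1) (f q.2).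

Lemma dotpB (u v w : 'rV[R]_d) : dotp u (v - w) = dotp u v - dotp u w.
Proof. by rewrite /dotp -sumrB; apply: eq_bigr => i _; rewrite !mxE mulrBr. Qed.

Lemma dt_bound f x y : is_encoder f -> -1 <= dt f (x, y) <= 1.
Proof.
move=> [_ n1]; rewrite /dt /dotp /=.
have N1 : forall z, \sum_(i < d) (f z 0 i) ^+ 2 = 1.
  move=> z; have := n1 z; move=> H; rewrite -(sqr_sqrtr (sumr_ge0 _ (fun i _ => sqr_ge0 (f z 0 i)))).
  by rewrite H expr1n.
have A : 0 <= \sum_(i < d) (f x 0 i - f y 0 i) ^+ 2 by apply: sumr_ge0 => i _; apply: sqr_ge0.
have B : 0 <= \sum_(i < d) (f x 0 i + f y 0 i) ^+ 2 by apply: sumr_ge0 => i _; apply: sqr_ge0.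
have EA : \sum_(i < d) (f x 0 i - f y 0 i) ^+ 2 =
   \sum_(i < d) (f x 0 i) ^+ 2 + \sum_(i < d) (f y 0 i) ^+ 2 - 2 * \sum_(i < d) f x 0 i * f y 0 i.
  rewrite mulr_sumr -big_split -sumrB /=; apply: eq_bigr => i _; ring.
have EB : \sum_(i < d) (f x 0 i + f y 0 i) ^+ 2 =
   \sum_(i < d) (f x 0 i) ^+ 2 + \sum_(i < d) (f y 0 i) ^+ 2 + 2 * \sum_(i < d) f x 0 i * f y 0 i.
  rewrite mulr_sumr -!big_split /=; apply: eq_bigr => i _; ring.
rewrite EA !N1 in A; rewrite EB !N1 in B.
apply/andP; split; lra.
Qed.

Definition Tcon (v : nat -> R) : R := ln (expR (v 0%N) + v 1%N) - v 0%N.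
Definition ccon f (i : nat) (q : X * X) : R := if i is 0%N then dt f q else 0.
Definition pcon f (i : nat) (q : X * X) : R := if i is 0%N then 0 else expR (dt f q).
Definition Tdis (v : nat -> R) : R := ln (v 1%N) - v 2%N * expR (- ln (v 0%N)).
Definition cdis g h (i : nat) (q : X * X) : R :=
  match i with 0%N => expR (dt h q) | 1%N => expR (dt g q) | _ => expR (dt h q) * dt g q end.

Lemma sum_gt0_cons (F : X -> R) z L : (forall y, 0 < F y) -> 0 < \sum_(y <- z :: L) F y.
Proof.
move=> F0; rewrite big_cons; have := F0 z.
have : 0 <= \sum_(y <- L) F y by apply: sumr_ge0 => y _; apply: ltW.
lra.
Qed.

Lemma conE f x xp s : con_integrand f x xp s =
  Tcon (fun i => ccon f i (x, xp) + \sum_(y <- s) pcon f i (x, y)).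
Proof.
rewrite /Tcon /ccon /pcon /= big1 // addr0 add0r /con_integrand /ell big_map.
set t0 := dt f (x, xp).
rewrite (eq_bigr (fun y => expR (dt f (x, y)) * expR (- t0))); last first.
  by move=> y _; rewrite dotpB opprB -expRD.
rewrite -mulr_suml.
have -> : 1 + (\sum_(y <- s) expR (dt f (x, y))) * expR (- t0) =
   (expR t0 + \sum_(y <- s) expR (dt f (x, y))) * expR (- t0).
  by rewrite mulrDl -expRD subrr expR0.
have S0 : 0 <= \sum_(y <- s) expR (dt f (x, y)) by apply: sumr_ge0 => y _; apply: expR_ge0.
rewrite lnM ?expRK //; rewrite posrE; last exact: expR_gt0.
have := expR_gt0 t0; lra.
Qed.

Lemma disE g h x xp s : dis_integrand g h x xp s =
  Tdis (fun i => cdis g h i (x, xp) + \sum_(y <- s) cdis g h i (x, y)).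
Proof.
rewrite /Tdis /cdis /=.
set L := xp :: s.
have c1 : forall F : X -> R, F xp + \sum_(y <- s) F y = \sum_(z <- L) F z by move=> F; rewrite big_cons.
rewrite (c1 (fun y => expR (dt h (x, y)))) (c1 (fun y => expR (dt g (x, y)))).
rewrite (c1 (fun y => expR (dt h (x, y)) * dt g (x, y))).
have pv : forall f, pvec f x xp s =
    [seq expR (dt f (x, z)) / \sum_(z' <- L) expR (dt f (x, z')) | z <- L].
  move=> f; rewrite /pvec /softmax.
  have -> : dotp (f x) (f xp) :: [seq dotp (f x) (f y) | y <- s] = [seq dt f (x, z) | z <- L] by [].
  by rewrite -map_comp big_map.
rewrite /dis_integrand !pv zip_map big_map /=.
set Zh := \sum_(z <- L) expR (dt h (x, z)).
set Zg := \sum_(z <- L) expR (dt g (x, z)).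
have Zh0 : 0 < Zh by apply: sum_gt0_cons => y; apply: expR_gt0.
have Zg0 : 0 < Zg by apply: sum_gt0_cons => y; apply: expR_gt0.
rewrite expRN lnK ?posrE //.
rewrite (eq_bigr (fun z => expR (dt h (x, z)) * dt g (x, z) / Zh - ln Zg * (expR (dt h (x, z)) / Zh))); last first.
  move=> z _; rewrite /= ln_div ?posrE ?expRK //; last exact: expR_gt0.
  ring.
rewrite sumrB -mulr_suml -mulr_sumr -mulr_suml -/Zh mulfV; last by apply: lt0r_neq0.
ring.
Qed.

Lemma HT_con : HT Tcon.
Proof.
move=> dP P a ma; rewrite /Tcon.
apply: measurable_funB; last exact: ma.
apply: measurableT_comp; first exact: measurable_ln.
apply: measurable_funD => //; apply: measurableT_comp => //; exact: measurable_expR.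
Qed.

Lemma HT_dis : HT Tdis.
Proof.
move=> dP P a ma; rewrite /Tdis.
apply: measurable_funB.
  apply: measurableT_comp => //; exact: measurable_ln.
apply: measurable_funM => //.
apply: measurableT_comp; first exact: measurable_expR.
apply: measurable_funN; apply: measurableT_comp => //; exact: measurable_ln.
Qed.

Lemma meas_dt f : is_encoder f -> measurable_fun setT (dt f).
Proof.
move=> [mf _]; rewrite /dt /dotp.
apply: measurable_sum => i.
apply: measurable_funM.
  exact: measurableT_comp (mf i) measurable_fst.
exact: measurableT_comp (mf i) measurable_snd.
Qed.

Lemma meas_ccon f i : is_encoder f -> measurable_fun setT (ccon f i).
Proof. by move=> ef; case: i => [|i] /=; [exact: meas_dt|exact: measurable_cst]. Qed.

Lemma meas_pcon f i : is_encoder f -> measurable_fun setT (pcon f i).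
Proof.
move=> ef; case: i => [|i] /=; first exact: measurable_cst.
apply: measurableT_comp; [exact: measurable_expR|exact: meas_dt].
Qed.

Lemma meas_cdis g h i : is_encoder g -> is_encoder h -> measurable_fun setT (cdis g h i).
Proof.
move=> eg eh; case: i => [|[|i]] /=.
- apply: measurableT_comp; [exact: measurable_expR|exact: meas_dt].
- apply: measurableT_comp; [exact: measurable_expR|exact: meas_dt].
- apply: measurable_funM; last exact: meas_dt.
  apply: measurableT_comp; [exact: measurable_expR|exact: meas_dt].
Qed.

Lemma con_ge0 (f : X -> 'rV[R]_d) (x xp : X) (s : seq X) : 0 <= con_integrand f x xp s.
Proof.
rewrite conE /Tcon /ccon /pcon /= big1 // addr0 add0r.
set t0 := dt f (x, xp).
have S0 : 0 <= \sum_(y <- s) expR (dt f (x, y)) by apply: sumr_ge0 => y _; apply: expR_ge0.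
rewrite subr_ge0 -{1}(expRK t0) ler_ln ?posrE; last 2 first.
- exact: expR_gt0.
- by have := expR_gt0 t0; lra.
lra.
Qed.

Lemma wsum_le (a b : X -> R) (L : seq X) (M : R) : 0 < M ->
  \sum_(z <- L) expR (b z) <= M ->
  \sum_(z <- L) expR (a z) * b z <= (\sum_(z <- L) expR (a z)) * ln M.
Proof.
move=> M0; elim: L => [|z L IH]; first by rewrite !big_nil mul0r.
rewrite !big_cons mulrDl => H.
have S0 : 0 <= \sum_(y <- L) expR (b y) by apply: sumr_ge0 => y _; apply: expR_ge0.
have bz : b z <= ln M.
  rewrite -{1}(expRK (b z)) ler_ln ?posrE //; last exact: expR_gt0.
  lra.
apply: lerD; last by apply: IH; have := expR_ge0 (b z); lra.
by rewrite ler_pM2l //; exact: expR_gt0.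
Qed.

Lemma dis_ge0 (g h : X -> 'rV[R]_d) (x xp : X) (s : seq X) : 0 <= dis_integrand g h x xp s.
Proof.
rewrite disE /Tdis /cdis /=.
set L := xp :: s.
have c1 : forall F : X -> R, F xp + \sum_(y <- s) F y = \sum_(z <- L) F z by move=> F; rewrite big_cons.
rewrite (c1 (fun y => expR (dt h (x, y)))) (c1 (fun y => expR (dt g (x, y)))).
rewrite (c1 (fun y => expR (dt h (x, y)) * dt g (x, y))).
set Zh := \sum_(z <- L) expR (dt h (x, z)).
set Zg := \sum_(z <- L) expR (dt g (x, z)).
have Zh0 : 0 < Zh by apply: sum_gt0_cons => y; apply: expR_gt0.
have Zg0 : 0 < Zg by apply: sum_gt0_cons => y; apply: expR_gt0.
rewrite expRN lnK ?posrE // subr_ge0 ler_pdivrMr // mulrC.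
by apply: (wsum_le (fun z => dt h (x, z)) (fun z => dt g (x, z))).
Qed.

Lemma sum_le_size (F : X -> R) (c : R) (s : seq X) : (forall y, F y <= c) ->
  \sum_(y <- s) F y <= (size s)%:R * c.
Proof.
move=> Fc; elim: s => [|y s IH]; first by rewrite big_nil mul0r.
rewrite big_cons /= -add1n natrD mulrDl mul1r; exact: lerD.
Qed.

Lemma alpha_gt0 k : 0 < alpha_k R k.
Proof.
rewrite /alpha_k; apply: divr_gt0; first by apply: mulr_gt0 => //; exact: expR_gt0.
have := expR_gt0 (2 : R); have : 0 <= k%:R :> R by []. lra.
Qed.

Lemma pointwise (g h : X -> 'rV[R]_d) k (x xp : X) (s : seq X) :
  is_encoder g -> is_encoder h -> size s = k ->
  con_integrand g x xp s <= alpha_k R k * con_integrand h x xp s + dis_integrand g h x xp s + beta_k R k /\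
  alpha_k R k * con_integrand h x xp s + dis_integrand g h x xp s + beta'_k R k <= con_integrand g x xp s.
Proof.
move=> eg eh sk.
rewrite !conE disE /Tcon /ccon /pcon /Tdis /cdis /= !big1_eq !addr0 !add0r.
set t0 := dt g (x, xp); set s0 := dt h (x, xp).
set S := \sum_(y <- s) expR (dt h (x, y)).
set Sg := \sum_(y <- s) expR (dt g (x, y)).
set Ws := \sum_(y <- s) expR (dt h (x, y)) * dt g (x, y).
have S0 : 0 <= S by apply: sumr_ge0 => y _; apply: expR_ge0.
have Sg0 : 0 <= Sg by apply: sumr_ge0 => y _; apply: expR_ge0.
have Es0 := expR_gt0 s0; have Et0 := expR_gt0 t0.
have Zh0 : 0 < expR s0 + S by lra.
rewrite expRN lnK ?posrE //.
set V := \sum_(y <- s) expR (dt h (x, y)) * (dt g (x, y) - t0).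
have VE : V = Ws - t0 * S.
  by rewrite /V /Ws /S mulr_sumr -sumrB; apply: eq_bigr => y _; ring.
have FH : (expR s0 * t0 + Ws) / (expR s0 + S) - t0 = V / (expR s0 + S).
  by rewrite VE; field; exact: lt0r_neq0.
have /andP[t0l t0u] := dt_bound g x xp eg.
have /andP[s0l s0u] := dt_bound h x xp eh.
rewrite -/t0 in t0l t0u; rewrite -/s0 in s0l s0u.
have Vu : V <= 2 * S.
  rewrite /V /S mulr_sumr; apply: ler_sum => y _.
  have /andP[yl yu] := dt_bound g x y eg.
  rewrite mulrC; apply: ler_wpM2r; [exact: expR_ge0|lra].
have Vl : - (2 * S) <= V.
  rewrite /V /S mulr_sumr -sumrN; apply: ler_sum => y _.
  have /andP[yl yu] := dt_bound g x y eg.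
  have := expR_ge0 (dt h (x, y)); nra.
have Sk : S <= k%:R * expR 1.
  rewrite -sk /S; apply: sum_le_size => y.
  by rewrite ler_expR; have /andP[] := dt_bound h x y eh.
have a0 := alpha_gt0 k.
have U := @core_upper R _ s0 _ _ (alpha_gt0 k) S0 Vu.
have Lo := @core_lower R k _ s0 _ _ (ltW (alpha_gt0 k)) s0l S0 Sk Vl.
rewrite /beta_k /beta'_k; split.
- have : ln (expR t0 + Sg) - t0 - (ln (expR t0 + Sg) - (expR s0 * t0 + Ws) / (expR s0 + S))
         = V / (expR s0 + S) by rewrite -FH; ring.
  lra.
- have : ln (expR t0 + Sg) - t0 - (ln (expR t0 + Sg) - (expR s0 * t0 + Ws) / (expR s0 + S))
         = V / (expR s0 + S) by rewrite -FH; ring.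
  lra.
Qed.
Local Open Scope ereal_scope.

Lemma main_sec k (g h : X -> 'rV[R]_d) : is_encoder g -> is_encoder h ->
  (Lcon mu D k g <= (alpha_k R k)%:E * Lcon mu D k h + Ldis mu D k g h + (beta_k R k)%:E)%E /\
  (Lcon mu D k g >= (alpha_k R k)%:E * Lcon mu D k h + Ldis mu D k g h + (beta'_k R k)%:E)%E.
Proof.
move=> eg eh.
set a := alpha_k R k.
have a0 : (0 <= a)%R by apply: ltW; apply: alpha_gt0.
pose Fc (f : X -> 'rV[R]_d) := fun (x xp : X) (s : seq X) => (con_integrand f x xp s)%:E.
pose Fd := fun (x xp : X) (s : seq X) => (dis_integrand g h x xp s)%:E.
have SQc : forall f, is_encoder f -> SQ k (Fc f).
  move=> f ef.
  rewrite (_ : Fc f = fun x xp s => (Tcon (fun i => ccon f i (x, xp) + \sum_(y <- s) pcon f i (x, y))%R)%:E); last first.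
    by apply/funext => x; apply/funext => xp; apply/funext => s; rewrite /Fc conE.
  apply: SQ_form; first exact: HT_con.
  - by move=> i; apply: meas_ccon.
  - by move=> i; apply: meas_pcon.
  - by move=> x xp s; rewrite -conE; apply: con_ge0.
have SQd : SQ k Fd.
  rewrite (_ : Fd = fun x xp s => (Tdis (fun i => cdis g h i (x, xp) + \sum_(y <- s) cdis g h i (x, y))%R)%:E); last first.
    by apply/funext => x; apply/funext => xp; apply/funext => s; rewrite /Fd disE.
  apply: SQ_form; first exact: HT_dis.
  - by move=> i; apply: meas_cdis.
  - by move=> i; apply: meas_cdis.
  - by move=> x xp s; rewrite -disE; apply: dis_ge0.
have nnc : forall f, nn (Fc f) by move=> f x xp s; rewrite lee_fin; apply: con_ge0.
have nnd : nn Fd by move=> x xp s; rewrite lee_fin; apply: dis_ge0.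
have nnaF : nn (fun x xp s => a%:E * Fc h x xp s).
  by move=> x xp s; apply: mule_ge0; [rewrite lee_fin|apply: nnc].
have nnaFd : nn (fun x xp s => a%:E * Fc h x xp s + Fd x xp s).
  by move=> x xp s; apply: adde_ge0; [apply: nnaF|apply: nnd].
have SQaFd : SQ k (fun x xp s => a%:E * Fc h x xp s + Fd x xp s).
  by apply: SQ_add => //; apply: SQ_scale => //; apply: SQc.
have E1 : SE k (fun x xp s => a%:E * Fc h x xp s + Fd x xp s) = a%:E * Lcon mu D k h + Ldis mu D k g h.
  rewrite sampleE_add //; last by apply: SQ_scale => //; apply: SQc.
  by rewrite sampleE_scale //; apply: SQc.
have b0 : (0 <= beta_k R k)%R.
  have h0 : (0 <= 2 * 0 :> R)%R by rewrite mulr0.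
  have := @core_upper R a 0%R 0%R 0%R (alpha_gt0 k) (lexx _) h0.
  by rewrite addr0 expRK subrr mulr0 add0r mul0r.
have b'0 : (0 <= - beta'_k R k)%R.
  have m1 : (-1 <= 0 :> R)%R by lra.
  have m2 : (0 <= k%:R * expR 1 :> R)%R by apply: mulr_ge0; [exact: ler0n|exact: expR_ge0].
  have m3 : (- (2 * 0) <= 0 :> R)%R by rewrite mulr0 oppr0.
  have := @core_lower R k a 0%R 0%R 0%R a0 m1 (lexx _) m2 m3.
  rewrite expR0 addr0 ln1 subrr mulr0 add0r mul0r /beta'_k -/a.
  lra.
split.
- apply: (@le_trans _ _ (SE k (fun x xp s => a%:E * Fc h x xp s + Fd x xp s + (beta_k R k)%:E))).
    apply: sampleE_le.
    + exact: nnc.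
    + exact: SQc.
    + apply: (@SQ_add k (fun x xp s => a%:E * Fc h x xp s + Fd x xp s) (fun _ _ _ => (beta_k R k)%:E)) => //.
      exact: SQ_cst.
    + move=> x xp s sk; rewrite /Fc /Fd -EFinM -!EFinD lee_fin.
      exact: (pointwise g h k x xp s eg eh sk).1.
  rewrite (@sampleE_add k (fun x xp s => a%:E * Fc h x xp s + Fd x xp s) (fun _ _ _ => (beta_k R k)%:E)) //; last first.
  + exact: SQ_cst.
  by rewrite sampleE_cst // E1.
- set b := (- beta'_k R k)%R.
  have : SE k (fun x xp s => a%:E * Fc h x xp s + Fd x xp s) <= SE k (fun x xp s => Fc g x xp s + b%:E).
    apply: sampleE_le => //.
    + apply: (@SQ_add k (Fc g) (fun _ _ _ => b%:E)); [exact: nnc|by move=> *; rewrite lee_fin|exact: SQc|exact: SQ_cst].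
    + move=> x xp s sk; rewrite /Fc /Fd -EFinM -!EFinD lee_fin.
      move: (pointwise g h k x xp s eg eh sk).2; rewrite -/a /b; lra.
  rewrite E1 (@sampleE_add k (Fc g) (fun _ _ _ => b%:E)); [|exact: nnc|by move=> *; rewrite lee_fin|exact: SQc|exact: SQ_cst].
  rewrite sampleE_cst // => H.
  rewrite (_ : (beta'_k R k)%:E = - b%:E); last by rewrite /b EFinN oppeK.
  by rewrite leeBlDr.
Qed.

End N.

Theorem mainTheorem5 (R : realType) (dX : measure_display) (X : measurableType dX)
  (C : countType) (d : nat) (hd : (0 < d)%N)
  (mu : C -> R) (D : C -> probability X R)
  (mu_ge0 : forall c, 0 <= mu c)
  (mu_sum1 : (\esum_(c in [set: C]) (mu c)%:E = 1)%E)
  (k : nat) (hk : (1 <= k)%N)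
  (g h : X -> 'rV[R]_d) (hg : is_encoder g) (hh : is_encoder h) :
  (Lcon mu D k g <= (alpha_k R k)%:E * Lcon mu D k h + Ldis mu D k g h
                      + (beta_k R k)%:E)%E /\
  (Lcon mu D k g >= (alpha_k R k)%:E * Lcon mu D k h + Ldis mu D k g h
                      + (beta'_k R k)%:E)%E.
Proof.
exact: (@main_sec R dX X C mu D mu_ge0 mu_sum1 d k g h hg hh).
Qed.
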